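(* Let $\lambda_1,\lambda_2\ge0$, let $\mathbf m\in\mathcal B(\lambda+\rho)_{res}$ be the head of its resonance family $RF(\mathbf m)$, with decoration $d=d(\mathbf m)>0$ and bounding data $s_2,s_5,s_6$. If $RF(\mathbf m)\cap\mathcal B(\lambda+\rho)=\emptyset$, then $d>\min\{s_2,s_5\}+s_6+2$.
   Context: For $\mathbf m\in\mathbb Z_{\ge0}^6$ and integers $\lambda_1,\lambda_2\ge0$: $s_1=\lambda_2+m_5+m_6-m_1-m_2-m_3$, $s_2=\lambda_2+m_5+m_6-m_2-2m_3$, $s_3=\lambda_2+m_6-m_3-m_4$, $s_4=\lambda_2+m_6-m_4-m_5$, $s_5=\lambda_2-m_5$, $s_6=\lambda_1-m_6$. $\mathcal B(\lambda+\rho)$: all $s_j\ge-1$ and $2s_3-s_4\ge-1$. $\mathcal B(\lambda+\rho)_{res}$: $m_3=m_5$, $s_j\ge-1$ for $j\in\{1,2,5,6\}$, $s_3=s_4\le0$ even; decoration $d(\mathbf m)=-s_3/2$. Weight $k(\mathbf m)=(m_2+3m_3+2m_4+3m_5+m_6,\ m_1+m_2+2m_3+m_4+m_5)$. Arrays $\left[\begin{smallmatrix}a&b&c&b&d\\&x&y&z&\\&&k&&\end{smallmatrix}\right]$ (entries in $\mathbb Z_{\ge0}$) with operators: $e_1$: $(a,c,d;y;k)\mapsto(a-1,c+1,d-1;y+1;k+1)$, zero if $\min\{a,d\}=0$; $e_2$: $(b,c;x,z;k)\mapsto(b-1,c+3;x+1,z+1;k+1)$, zero if $b=0$; $f_1$: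 $(a,c,d;y;k)\mapsto(a+1,c-1,d+1;y-1;k-1)$, zero if $\min\{c,y,k\}=0$; $f_2$: $(b,c;x,z;k)\mapsto(b+1,c-3;x-1,z-1;k-1)$, zero if $\min\{x,z,k\}=0$ or $c<3$ (unlisted entries unchanged; both copies of $b$ change together). $A(\mathbf m)=\left[\begin{smallmatrix}m_2&m_5&m_4&m_5&m_6\\&s_2+1&s_6+1&s_5+1&\\&&d(\mathbf m)&&\end{smallmatrix}\right]$. For an array $A$, $\epsilon_i(A)=\max\{n\ge0:e_i^n(A)\ne0\}$ and $\mathrm{hd}(A)=e_1^{\epsilon_1(A)}e_2^{\epsilon_2(A)}(A)$. On $\mathcal B(\lambda+\rho)_{res}$, $\mathbf m\sim\mathbf n$ iff $k(\mathbf m)=k(\mathbf n)$ and $\mathrm{hd}(A(\mathbf m))=\mathrm{hd}(A(\mathbf n))$; the class of $\mathbf m$ is its resonance family $RF(\mathbf m)$, whose head is the unique element $\mathbf n$ with $A(\mathbf n)=\mathrm{hd}(A(\mathbf n))$. *)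

(* Defs.v *)
From Stdlib Require Import ZArith Arith Bool.
Open Scope Z_scope.

Record M6 := mkM6 { m1 : nat; m2 : nat; m3 : nat; m4 : nat; m5 : nat; m6 : nat }.


Definition s1 (lam1 lam2 : nat) (m : M6) : Z :=
  Z.of_nat lam2 + Z.of_nat (m5 m) + Z.of_nat (m6 m) - Z.of_nat (m1 m) - Z.of_nat (m2 m) - Z.of_nat (m3 m).
Definition s2 (lam1 lam2 : nat) (m : M6) : Z :=
  Z.of_nat lam2 + Z.of_nat (m5 m) + Z.of_nat (m6 m) - Z.of_nat (m2 m) - 2 * Z.of_nat (m3 m).
Definition s3 (lam1 lam2 : nat) (m : M6) : Z := Z.of_nat lam2 + Z.of_nat (m6 m) - Z.of_nat (m3 m) - Z.of_nat (m4 m).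
Definition s4 (lam1 lam2 : nat) (m : M6) : Z := Z.of_nat lam2 + Z.of_nat (m6 m) - Z.of_nat (m4 m) - Z.of_nat (m5 m).
Definition s5 (lam1 lam2 : nat) (m : M6) : Z := Z.of_nat lam2 - Z.of_nat (m5 m).
Definition s6 (lam1 lam2 : nat) (m : M6) : Z := Z.of_nat lam1 - Z.of_nat (m6 m).

Definition inB (lam1 lam2 : nat) (m : M6) : Prop :=
  s1 lam1 lam2 m >= -1 /\ s2 lam1 lam2 m >= -1 /\ s3 lam1 lam2 m >= -1 /\ s4 lam1 lam2 m >= -1 /\ s5 lam1 lam2 m >= -1 /\ s6 lam1 lam2 m >= -1
  /\ 2 * s3 lam1 lam2 m - s4 lam1 lam2 m >= -1.

Definition inBres (lam1 lam2 : nat) (m : M6) : Prop :=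
  m3 m = m5 m /\
  s1 lam1 lam2 m >= -1 /\ s2 lam1 lam2 m >= -1 /\ s5 lam1 lam2 m >= -1 /\ s6 lam1 lam2 m >= -1 /\
  s3 lam1 lam2 m = s4 lam1 lam2 m /\ s3 lam1 lam2 m <= 0 /\ Z.Even (s3 lam1 lam2 m).

Definition deco (lam1 lam2 : nat) (m : M6) : Z := - s3 lam1 lam2 m / 2.

Definition weight (m : M6) : nat * nat :=
  ((m2 m + 3 * m3 m + 2 * m4 m + 3 * m5 m + m6 m)%nat,
   (m1 m + m2 m + 2 * m3 m + m4 m + m5 m)%nat).

(* Arrays [a b c b d ; x y z ; k] with entries in Z_{>=0} *)
Record Arr := mkArr { ar_a : nat; ar_b : nat; ar_c : nat; ar_d : nat;
                      ar_x : nat; ar_y : nat; ar_z : nat; ar_k : nat }.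

(* None encodes the zero result *)
Definition e1 (A : Arr) : option Arr :=
  if (Nat.min (ar_a A) (ar_d A) =? 0)%nat then None
  else Some (mkArr (ar_a A - 1) (ar_b A) (ar_c A + 1) (ar_d A - 1)
                   (ar_x A) (ar_y A + 1) (ar_z A) (ar_k A + 1)).
Definition e2 (A : Arr) : option Arr :=
  if (ar_b A =? 0)%nat then None
  else Some (mkArr (ar_a A) (ar_b A - 1) (ar_c A + 3) (ar_d A)
                   (ar_x A + 1) (ar_y A) (ar_z A + 1) (ar_k A + 1)).
Definition f1 (A : Arr) : option Arr :=
  if (Nat.min (ar_c A) (Nat.min (ar_y A) (ar_k A)) =? 0)%nat then None
  else Some (mkArr (ar_a A + 1) (ar_b A) (ar_c A - 1) (ar_d A + 1)
                   (ar_x A) (ar_y A - 1) (ar_z A) (ar_k A - 1)).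
Definition f2 (A : Arr) : option Arr :=
  if ((Nat.min (ar_x A) (Nat.min (ar_z A) (ar_k A)) =? 0)%nat || (ar_c A <? 3)%nat)%bool then None
  else Some (mkArr (ar_a A) (ar_b A + 1) (ar_c A - 3) (ar_d A)
                   (ar_x A - 1) (ar_y A) (ar_z A - 1) (ar_k A - 1)).

Fixpoint iterop (e : Arr -> option Arr) (n : nat) (A : Arr) : option Arr :=
  match n with
  | O => Some A
  | S n' => match iterop e n' A with None => None | Some B => e B end
  end.

Definition IsEps (e : Arr -> option Arr) (A : Arr) (n : nat) : Prop :=
  iterop e n A <> None /\ (forall k, iterop e k A <> None -> (k <= n)%nat).

Definition IsHd (A H : Arr) : Prop :=
  exists n1 n2, IsEps e1 A n1 /\ IsEps e2 A n2 /\
    match iterop e2 n2 A with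
    | None => False
    | Some B => iterop e1 n1 B = Some H
    end.

(* the array A(m) (entries are nonnegative on B_res) *)
Definition arrA (lam1 lam2 : nat) (m : M6) : Arr :=
  mkArr (m2 m) (m5 m) (m4 m) (m6 m)
        (Z.to_nat (s2 lam1 lam2 m + 1)) (Z.to_nat (s6 lam1 lam2 m + 1))
        (Z.to_nat (s5 lam1 lam2 m + 1)) (Z.to_nat (deco lam1 lam2 m)).

Definition resEquiv (lam1 lam2 : nat) (m n : M6) : Prop :=
  weight m = weight n /\
  exists H, IsHd (arrA lam1 lam2 m) H /\ IsHd (arrA lam1 lam2 n) H.

Definition IsHead (lam1 lam2 : nat) (m : M6) : Prop :=
  IsHd (arrA lam1 lam2 m) (arrA lam1 lam2 m).

(* Main.v *)
Require Import Defs.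
From Stdlib Require Import ZArith Lia.
Open Scope Z_scope.

Lemma iter_k (e : Arr -> option Arr) :
  (forall A B, e A = Some B -> ar_k B = (ar_k A + 1)%nat) ->
  forall k A B, iterop e k A = Some B -> ar_k B = (ar_k A + k)%nat.
Proof.
  intros He k; induction k as [|k IH]; intros A B H; simpl in H.
  - injection H; intros; subst; lia.
  - destruct (iterop e k A) as [C|] eqn:HC; [|discriminate].
    apply He in H. apply IH in HC. lia.
Qed.

Lemma e1k A B : e1 A = Some B -> ar_k B = (ar_k A + 1)%nat.
Proof. unfold e1; destruct (_ =? _)%nat; intro H; [discriminate|injection H; intros; subst; reflexivity]. Qed.
Lemma e2k A B : e2 A = Some B -> ar_k B = (ar_k A + 1)%nat.
Proof. unfold e2; destruct (_ =? _)%nat; intro H; [discriminate|injection H; intros; subst; reflexivity]. Qed.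

Lemma iter_e2 A : forall k, (k <= ar_b A)%nat ->
  iterop e2 k A = Some (mkArr (ar_a A) (ar_b A - k) (ar_c A + 3*k) (ar_d A)
     (ar_x A + k) (ar_y A) (ar_z A + k) (ar_k A + k)).
Proof.
  induction k as [|k IH]; intros Hk; simpl.
  - destruct A; simpl; f_equal; f_equal; lia.
  - rewrite IH by lia. unfold e2; simpl.
    destruct (ar_b A - k =? 0)%nat eqn:E; [apply Nat.eqb_eq in E; lia|].
    f_equal; f_equal; lia.
Qed.

Lemma iter_e2_none A : forall k, (ar_b A < k)%nat -> iterop e2 k A = None.
Proof.
  induction k as [|k IH]; intros Hk; [lia|]. simpl.
  destruct (Nat.eq_dec k (ar_b A)) as [Heq|Hne].
  - rewrite iter_e2 by lia. unfold e2; simpl.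
    replace (ar_b A - k =? 0)%nat with true; [reflexivity|symmetry; apply Nat.eqb_eq; lia].
  - rewrite IH by lia; reflexivity.
Qed.

Lemma iter_e1 A : forall k, (k <= Nat.min (ar_a A) (ar_d A))%nat ->
  iterop e1 k A = Some (mkArr (ar_a A - k) (ar_b A) (ar_c A + k) (ar_d A - k)
     (ar_x A) (ar_y A + k) (ar_z A) (ar_k A + k)).
Proof.
  induction k as [|k IH]; intros Hk; simpl.
  - destruct A; simpl; f_equal; f_equal; lia.
  - rewrite IH by lia. unfold e1; simpl.
    destruct (Nat.min (ar_a A - k) (ar_d A - k) =? 0)%nat eqn:E; [apply Nat.eqb_eq in E; lia|].
    f_equal; f_equal; lia.
Qed.

Lemma iter_e1_none A : forall k, (Nat.min (ar_a A) (ar_d A) < k)%nat -> iterop e1 k A = None.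
Proof.
  induction k as [|k IH]; intros Hk; [lia|]. simpl.
  destruct (Nat.eq_dec k (Nat.min (ar_a A) (ar_d A))) as [Heq|Hne].
  - rewrite iter_e1 by lia. unfold e1; simpl.
    replace (Nat.min (ar_a A - k) (ar_d A - k) =? 0)%nat with true; [reflexivity|symmetry; apply Nat.eqb_eq; lia].
  - rewrite IH by lia; reflexivity.
Qed.

Lemma eps_e2 A : IsEps e2 A (ar_b A).
Proof.
  split.
  - rewrite iter_e2 by lia; discriminate.
  - intros k Hk. destruct (Nat.le_gt_cases k (ar_b A)); auto.
    exfalso; apply Hk; apply iter_e2_none; lia.
Qed.

Lemma eps_e1 A : IsEps e1 A (Nat.min (ar_a A) (ar_d A)).
Proof.
  split.
  - rewrite iter_e1 by lia; discriminate.
  - intros k Hk. destruct (Nat.le_gt_cases k (Nat.min (ar_a A) (ar_d A))); auto.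
    exfalso; apply Hk; apply iter_e1_none; lia.
Qed.

Lemma hd_gen A : IsHd A
  (mkArr (ar_a A - Nat.min (ar_a A) (ar_d A)) 0
     (ar_c A + 3 * ar_b A + Nat.min (ar_a A) (ar_d A)) (ar_d A - Nat.min (ar_a A) (ar_d A))
     (ar_x A + ar_b A) (ar_y A + Nat.min (ar_a A) (ar_d A)) (ar_z A + ar_b A)
     (ar_k A + ar_b A + Nat.min (ar_a A) (ar_d A))).
Proof.
  exists (Nat.min (ar_a A) (ar_d A)), (ar_b A). split; [apply eps_e1|]. split; [apply eps_e2|].
  rewrite iter_e2 by lia. rewrite iter_e1; simpl; [|lia].
  f_equal; f_equal; lia.
Qed.

Lemma eps_unique e A n1 n2 : IsEps e A n1 -> IsEps e A n2 -> n1 = n2.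
Proof. intros [H1 H1'] [H2 H2']. specialize (H1' _ H2). specialize (H2' _ H1). lia. Qed.

Theorem mainTheorem9 (lam1 lam2 : nat) (m : M6) :
  inBres lam1 lam2 m ->
  IsHead lam1 lam2 m ->
  deco lam1 lam2 m > 0 ->
  (forall n : M6, inBres lam1 lam2 n -> resEquiv lam1 lam2 n m -> ~ inB lam1 lam2 n) ->
  deco lam1 lam2 m > Z.min (s2 lam1 lam2 m) (s5 lam1 lam2 m) + s6 lam1 lam2 m + 2.
Proof.
  intros Hres Hhead Hd Hno.
  destruct Hhead as (n1 & n2 & E1 & E2 & Hit).
  destruct (iterop e2 n2 (arrA lam1 lam2 m)) as [B|] eqn:HB; [|contradiction].
  pose proof (iter_k e2 e2k _ _ _ HB) as Kb.
  pose proof (iter_k e1 e1k _ _ _ Hit) as Kh.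
  assert (n1 = 0%nat /\ n2 = 0%nat) as [-> ->] by lia. clear Kb Kh.
  pose proof (eps_unique _ _ _ _ E1 (eps_e1 _)) as Hmin.
  pose proof (eps_unique _ _ _ _ E2 (eps_e2 _)) as Hb.
  cbn [m1 m2 m3 m4 m5 m6 ar_a ar_b ar_c ar_d ar_x ar_y ar_z ar_k] in Hmin, Hb.
  destruct Hres as (H35 & Hs1 & Hs2 & Hs5 & Hs6 & H34 & H3le & [t Ht]).
  assert (Hdeco : deco lam1 lam2 m = - t).
  { unfold deco. rewrite Ht. replace (- (2 * t)) with ((-t) * 2) by ring. apply Z.div_mul; lia. }
  destruct (Z_lt_le_dec (Z.min (s2 lam1 lam2 m) (s5 lam1 lam2 m) + s6 lam1 lam2 m + 2) (deco lam1 lam2 m)) as [Hlt|Hle]; [lia|].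
  exfalso.
  set (D := deco lam1 lam2 m) in *.
  set (j0 := Z.max 0 (D - (s6 lam1 lam2 m + 1))).
  assert (Hj0 : 0 <= j0 /\ j0 >= D - (s6 lam1 lam2 m + 1) /\ (j0 = 0 \/ j0 = D - (s6 lam1 lam2 m + 1))) by lia.
  assert (Hij : 0 <= D - j0) by (unfold s6 in *; lia).
  set (i := Z.to_nat (D - j0)). set (j := Z.to_nat j0).
  assert (Hi : Z.of_nat i = D - j0) by (unfold i; lia).
  assert (Hj : Z.of_nat j = j0) by (unfold j; lia).
  clearbody i j j0 D.
  unfold arrA in Hmin, Hb; cbn [ar_a ar_b ar_d] in Hmin, Hb.
  unfold s1, s2, s3, s4, s5, s6 in *.
  destruct m as [a1 a2 a3 a4 a5 a6]; cbn [m1 m2 m3 m4 m5 m6 ar_a ar_b ar_c ar_d ar_x ar_y ar_z ar_k] in *.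
  set (n := mkM6 a1 (a2 + i) j (a4 - i - 3 * j) j (a6 + i)).
  apply (Hno n).
  - unfold inBres, n, s1, s2, s3, s4, s5, s6; cbn [m1 m2 m3 m4 m5 m6 ar_a ar_b ar_c ar_d ar_x ar_y ar_z ar_k].
    split; [reflexivity|]. repeat split; try lia.
    all: try (exists 0; lia).
  - split.
    + unfold weight, n; cbn [m1 m2 m3 m4 m5 m6 ar_a ar_b ar_c ar_d ar_x ar_y ar_z ar_k]. f_equal; lia.
    + exists (arrA lam1 lam2 (mkM6 a1 a2 a3 a4 a5 a6)). split.
      * pose proof (hd_gen (arrA lam1 lam2 n)) as HG.
        match type of HG with IsHd _ ?X => replace X with (arrA lam1 lam2 (mkM6 a1 a2 a3 a4 a5 a6)) in HG; [exact HG|] end.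
        unfold arrA, n, deco, s2, s3, s5, s6; cbn [m1 m2 m3 m4 m5 m6 ar_a ar_b ar_c ar_d ar_x ar_y ar_z ar_k].
        f_equal. all: try lia. Z.div_mod_to_equations. lia.
      * exists 0%nat, 0%nat. split; [exact E1|]. split; [exact E2|].
        rewrite HB. exact Hit.
  - unfold inB, n, s1, s2, s3, s4, s5, s6; cbn [m1 m2 m3 m4 m5 m6 ar_a ar_b ar_c ar_d ar_x ar_y ar_z ar_k]. repeat split; lia.
Qed.
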